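(* Assume the setting below, let $\lambda>0$ with $\mu_+(\max\{\lambda,1\})\le1$, assume (A1), (A2), (A4), (A5), (A6), (A7), and (A8) with $\beta=0$. If $r$ is a cavitating equilibrium solution with $r(1)=\lambda$, then $$\lim_{\rho\to0^+}r'(\rho)\tau(\rho)^{n-1}=\varpi,$$ where $\varpi>0$ is the (unique) point with $h'(\varpi)=0$.
   Context: Setting: $n\ge2$; $\kappa$ continuous on $[0,\infty)$, $\mu_+(\lambda)=\int_0^\lambda s\max\{\kappa(s),0\}ds$; $f$ solves $f''+\kappa f=0$, $f(0)=0$, $f'(0)=1$. $\Phi(v_1,\dots,v_n)=\sum_i\phi(v_i)+h(v_1\cdots v_n)$, $\tau(\rho)=f(r(\rho))/f(\rho)$, $T(\rho)=\tau^{n-1}\big[\phi'(r')+h'(r'\tau^{n-1})\tau^{n-1}\big]$ (radial Cauchy stress). An equilibrium solution with $r(1)=\lambda$ is $r\in C^1(0,1]$, twice differentiable on $(0,1)$, $r'>0$ on $(0,1]$, $r(0):=\lim_{\rho\to0^+}r(\rho)\ge0$, $r(1)=\lambda$, satisfying on $(0,1)$ $$f(\rho)\big[\phi''(r')+h''(r'\tau^{n-1})\tau^{2(n-1)}\big]r''=(n-1)\big[f'(r)\phi'(\tau)-f'(\rho)\phi'(r')\big]-(n-1)\big(f'(r)r'-f'(\rho)\tau\big)h''(r'\tau^{n-1})\,r'\tau^{2n-3};$$ it is cavitating if $r(0)>0$ and $\lim_{\rho\to0^+}T(\rho)=0$. (A1) $h$ is $C^2$, strictly convex. (A2) $\lim_{v\to0^+}h(v)=\lim_{v\to\infty}h(v)/v=+\infty$.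 (A4) $\phi:(0,\infty)\to(0,\infty)$ $C^2$, convex. (A5) $v\phi'(v)$ increasing. (A6) there is $t_0\ge0$ with $\phi'(t_0)=0$; $q_1(s)=\sup_{v>t_0}\phi'(v)/\phi'(sv)$ ($s\ge1$), $q_0(s)=\inf_{v>t_0/s}\phi'(v)/\phi'(sv)$ ($s\in(0,1]$) satisfy $q_1\in C^1[1,\infty)$, $q_0\in C^1(0,1]$, $q_1(s)\to0$ ($s\to\infty$), $q_0(s)\to\infty$ ($s\to0^+$), $q_1'<0$, $q_0'<0$. (A7) there are $\delta_0,\delta_1>0$ with $|\phi'(sv)|\le\delta_1\phi(v)/v$ for all $v>0$ whenever $|s-1|<\delta_0$. (A8) $\phi(v)\le\delta_2(1+v^\alpha+v^{-\beta})$ for all $v>0$, $\delta_2>0$, $0<\alpha<n$, $0\le\beta<1+1/(n-1)$. *)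

(* Defs.v *)
From Stdlib Require Import Reals Lra Lia.
Open Scope R_scope.

Definition right_lim (g : R -> R) (a l : R) : Prop :=
  forall eps, 0 < eps -> exists delta, 0 < delta /\
    forall x, a < x < a + delta -> Rabs (g x - l) < eps.

Definition left_lim (g : R -> R) (a l : R) : Prop :=
  forall eps, 0 < eps -> exists delta, 0 < delta /\
    forall x, a - delta < x < a -> Rabs (g x - l) < eps.

Definition right_lim_infty (g : R -> R) (a : R) : Prop :=
  forall M, exists delta, 0 < delta /\ forall x, a < x < a + delta -> M < g x.

Definition lim_infty_infty (g : R -> R) : Prop :=
  forall M, exists X, forall x, X < x -> M < g x.

Definition lim_infty (g : R -> R) (l : R) : Prop :=
  forall eps, 0 < eps -> exists X, forall x, X < x -> Rabs (g x - l) < eps.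

Definition right_deriv (g : R -> R) (a l : R) : Prop :=
  right_lim (fun x => (g x - g a) / (x - a)) a l.
Definition left_deriv (g : R -> R) (a l : R) : Prop :=
  left_lim (fun x => (g x - g a) / (x - a)) a l.

Definition convex_pos (g : R -> R) : Prop :=
  forall x y t, 0 < x -> 0 < y -> 0 <= t <= 1 ->
    g (t * x + (1 - t) * y) <= t * g x + (1 - t) * g y.
Definition strictly_convex_pos (g : R -> R) : Prop :=
  forall x y t, 0 < x -> 0 < y -> x <> y -> 0 < t < 1 ->
    g (t * x + (1 - t) * y) < t * g x + (1 - t) * g y.

Definition is_lower_bound (E : R -> Prop) (m : R) : Prop := forall x, E x -> m <= x.
Definition is_glb (E : R -> Prop) (m : R) : Prop :=
  is_lower_bound E m /\ forall b, is_lower_bound E b -> b <= m.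

(* Main.v *)
Require Import Defs.
From Stdlib Require Import Reals Lra Lia Classical.
From Coquelicot Require Coquelicot.
Open Scope R_scope.

Lemma cont_eps (f : R -> R) x :
  continuity_pt f x <-> (forall eps, 0 < eps -> exists d, 0 < d /\ forall y, Rabs (y - x) < d -> Rabs (f y - f x) < eps).
Proof.
  unfold continuity_pt, continue_in, limit1_in, limit_in; simpl; unfold R_dist, D_x, no_cond.
  split.
  - intros H eps He. destruct (H eps He) as [d [Hd Hy]]. exists d; split; auto.
    intros y Hyx. destruct (Req_dec x y) as [<-|Hne].
    + replace (f x - f x) with 0 by ring. rewrite Rabs_R0; lra.
    + apply Hy; auto.
  - intros H eps He. destruct (H eps He) as [d [Hd Hy]]. exists d; split; auto.
    intros y [_ Hyx]. apply Hy; auto.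
Qed.

Lemma dcont (f : R -> R) x l : derivable_pt_lim f x l -> continuity_pt f x.
Proof. intros H. apply derivable_continuous_pt. exists l. exact H. Qed.

Lemma mono_of_deriv (g d : R -> R) a b :
  a < b -> (forall c, a <= c <= b -> derivable_pt_lim g c (d c)) ->
  (forall c, a < c < b -> 0 <= d c) -> g a <= g b.
Proof.
  intros Hab Hd Hpos. destruct (MVT_cor2 g d a b Hab Hd) as [c [Hc Hc2]].
  specialize (Hpos c Hc2). nra.
Qed.

Lemma mono_of_deriv_neg (g d : R -> R) a b :
  a < b -> (forall c, a <= c <= b -> derivable_pt_lim g c (d c)) ->
  (forall c, a < c < b -> d c <= 0) -> g b <= g a.
Proof.
  intros Hab Hd Hpos. destruct (MVT_cor2 g d a b Hab Hd) as [c [Hc Hc2]].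
  specialize (Hpos c Hc2). nra.
Qed.

Lemma smono_of_deriv (g d : R -> R) a b :
  a < b -> (forall c, a <= c <= b -> derivable_pt_lim g c (d c)) ->
  (forall c, a < c < b -> 0 < d c) -> g a < g b.
Proof.
  intros Hab Hd Hpos. destruct (MVT_cor2 g d a b Hab Hd) as [c [Hc Hc2]].
  specialize (Hpos c Hc2). nra.
Qed.

Lemma phi1_nonneg (phi phi1 : R -> R) (n : nat)
  (Hphi_d : forall v, 0 < v -> derivable_pt_lim phi v (phi1 v))
  (Hphi_A5 : forall v w, 0 < v -> v < w -> v * phi1 v < w * phi1 w)
  (HA8 : exists delta2 alpha, 0 < delta2 /\ 0 < alpha < INR n /\
     forall v, 0 < v -> phi v <= delta2 * (1 + Rpower v alpha + Rpower v (- 0))) :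
  forall v, 0 < v -> 0 <= phi1 v.
Proof.
  destruct HA8 as [d2 [al [Hd2 [Hal Hb]]]].
  assert (Hbd : forall v, 0 < v <= 1 -> phi v <= 3 * d2).
  { intros v Hv. specialize (Hb v (proj1 Hv)).
    assert (Rpower v al <= 1).
    { unfold Rpower. rewrite <- exp_0. destruct (Rle_lt_or_eq_dec _ _ (proj2 Hv)) as [Hl|He].
      - left. apply exp_increasing. assert (ln v < 0). { rewrite <- ln_1. apply ln_increasing; lra. } nra.
      - subst. rewrite ln_1. rewrite Rmult_0_r. lra. }
    assert (Rpower v (-0) = 1). { unfold Rpower. replace (-0 * ln v) with 0 by ring. apply exp_0. }
    nra. }
  intros x0 Hx0. destruct (Rle_or_lt 0 (phi1 x0)) as [H|H]; auto. exfalso.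
  set (c := - (x0 * phi1 x0)). assert (Hc : 0 < c) by (unfold c; nra).
  set (x1 := Rmin x0 1). assert (Hx1 : 0 < x1 <= 1 /\ x1 <= x0) by (unfold x1; split; [split|]; [apply Rmin_pos|apply Rmin_r|apply Rmin_l]; lra).
  set (g := fun x => phi x + c * ln x).
  set (K := Rmax (- ln x1 + 1) ((3 * d2 - g x1) / c + 1)).
  set (x := exp (- K)).
  assert (Hxpos : 0 < x) by apply exp_pos.
  assert (Hxx1 : x < x1).
  { unfold x. rewrite <- (exp_ln x1) by lra. apply exp_increasing. unfold K.
    pose proof (Rmax_l (- ln x1 + 1) ((3 * d2 - g x1) / c + 1)). lra. }
  assert (Hg : g x1 <= g x).
  { apply (mono_of_deriv_neg g (fun y => phi1 y + c * / y)); [lra| |].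
    - intros y Hy. unfold g. apply derivable_pt_lim_plus. apply Hphi_d; lra.
      apply (derivable_pt_lim_scal ln c y). apply derivable_pt_lim_ln; lra.
    - intros y Hy. assert (y * phi1 y < x0 * phi1 x0) by (apply Hphi_A5; lra).
      assert (Hy0 : 0 < y) by lra.
      assert (phi1 y < - c / y). { apply (Rmult_lt_reg_l y); auto. field_simplify; [|lra]. unfold c. lra. }
      unfold Rdiv in *. lra. }
  unfold g in Hg. replace (ln x) with (- K) in Hg by (unfold x; rewrite ln_exp; auto).
  assert (phi x <= 3 * d2) by (apply Hbd; lra).
  assert (HK : (3 * d2 - g x1) / c + 1 <= K) by apply Rmax_r.
  assert (3 * d2 - g x1 + c <= K * c).
  { apply (Rmult_le_compat_r c) in HK; [|lra]. field_simplify in HK; lra. }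
  unfold g in *. nra.
Qed.

Lemma cvx_slope_l (g g1 : R -> R)
  (Hd : forall v, 0 < v -> derivable_pt_lim g v (g1 v)) (Hc : convex_pos g) :
  forall x y, 0 < x -> x < y -> g1 x <= (g y - g x) / (y - x).
Proof.
  intros x y Hx Hxy. set (S := (g y - g x) / (y - x)).
  destruct (Rle_or_lt (g1 x) S) as [H|H]; auto. exfalso.
  destruct (Hd x Hx (g1 x - S) ltac:(lra)) as [[d Hdp] Hdl].
  set (t := Rmin (1/2) (d / (2 * (y - x)))).
  assert (Ht : 0 < t <= 1/2).
  { unfold t. split. apply Rmin_pos. lra. apply Rdiv_lt_0_compat; lra. apply Rmin_l. }
  assert (Ht2 : t <= d / (2 * (y - x))) by apply Rmin_r.
  set (hh := t * (y - x)).
  assert (Hhh : 0 < hh < d).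
  { unfold hh. split. nra. apply (Rmult_le_compat_r (y - x)) in Ht2; [|lra].
    replace (d / (2 * (y - x)) * (y - x)) with (d/2) in Ht2 by (field; lra). lra. }
  specialize (Hdl hh ltac:(lra) ltac:(rewrite Rabs_right; simpl; lra)).
  specialize (Hc y x t ltac:(lra) Hx ltac:(lra)).
  replace (t * y + (1 - t) * x) with (x + hh) in Hc by (unfold hh; ring).
  assert (HS : g y - g x = S * (y - x)) by (unfold S; field; lra).
  assert ((g (x + hh) - g x) / hh <= S).
  { apply (Rmult_le_reg_r hh); [lra|]. field_simplify; [|lra]. unfold hh in *. nra. }
  apply Rabs_def2 in Hdl. lra.
Qed.

Lemma cvx_slope_r (g g1 : R -> R)
  (Hd : forall v, 0 < v -> derivable_pt_lim g v (g1 v)) (Hc : convex_pos g) :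
  forall x y, 0 < x -> x < y -> (g y - g x) / (y - x) <= g1 y.
Proof.
  intros x y Hx Hxy. set (S := (g y - g x) / (y - x)).
  destruct (Rle_or_lt S (g1 y)) as [H|H]; auto. exfalso.
  destruct (Hd y ltac:(lra) (S - g1 y) ltac:(lra)) as [[d Hdp] Hdl].
  set (t := Rmin (1/2) (d / (2 * (y - x)))).
  assert (Ht : 0 < t <= 1/2).
  { unfold t. split. apply Rmin_pos. lra. apply Rdiv_lt_0_compat; lra. apply Rmin_l. }
  assert (Ht2 : t <= d / (2 * (y - x))) by apply Rmin_r.
  set (hh := - (t * (y - x))).
  assert (Hhh : 0 < - hh < d).
  { unfold hh. split. nra. apply (Rmult_le_compat_r (y - x)) in Ht2; [|lra].
    replace (d / (2 * (y - x)) * (y - x)) with (d/2) in Ht2 by (field; lra). lra. }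
  specialize (Hdl hh ltac:(lra) ltac:(rewrite Rabs_left; simpl; lra)).
  specialize (Hc x y t Hx ltac:(lra) ltac:(lra)).
  replace (t * x + (1 - t) * y) with (y + hh) in Hc by (unfold hh; ring).
  assert (HS : g y - g x = S * (y - x)) by (unfold S; field; lra).
  assert (S <= (g (y + hh) - g y) / hh).
  { apply (Rmult_le_reg_r (- hh)); [lra|].
    replace ((g (y + hh) - g y) / hh * - hh) with (g y - g (y + hh)) by (field; lra).
    unfold hh in *. nra. }
  apply Rabs_def2 in Hdl. lra.
Qed.

Lemma cvx_mono (g g1 : R -> R)
  (Hd : forall v, 0 < v -> derivable_pt_lim g v (g1 v)) (Hc : convex_pos g) :
  forall x y, 0 < x -> x <= y -> g1 x <= g1 y.
Proof.
  intros x y Hx Hxy. destruct (Rle_lt_or_eq_dec _ _ Hxy) as [H|H]; [|subst; lra].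
  pose proof (cvx_slope_l g g1 Hd Hc x y Hx H). pose proof (cvx_slope_r g g1 Hd Hc x y Hx H). lra.
Qed.

Lemma scvx_smono (g g1 : R -> R)
  (Hd : forall v, 0 < v -> derivable_pt_lim g v (g1 v)) (Hc : strictly_convex_pos g) :
  forall x y, 0 < x -> x < y -> g1 x < g1 y.
Proof.
  assert (Hc' : convex_pos g).
  { intros a b t Ha Hb Ht. destruct (Req_dec a b) as [<-|Hne].
    - replace (t * a + (1 - t) * a) with a by ring. lra.
    - destruct (Req_dec t 0) as [->|H0]. replace (0 * a + (1 - 0) * b) with b by ring. lra.
      destruct (Req_dec t 1) as [->|H1]. replace (1 * a + (1 - 1) * b) with a by ring. lra.
      left. apply Hc; auto. lra. }
  intros x y Hx Hxy. set (m := (x + y) / 2).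
  pose proof (cvx_slope_l g g1 Hd Hc' x m Hx ltac:(unfold m; lra)).
  pose proof (cvx_slope_r g g1 Hd Hc' m y ltac:(unfold m; lra) ltac:(unfold m; lra)).
  specialize (Hc x y (1/2) Hx ltac:(lra) ltac:(lra) ltac:(lra)).
  replace (1 / 2 * x + (1 - 1 / 2) * y) with m in Hc by (unfold m; field).
  assert (Hmx : m - x = y - m) by (unfold m; field).
  rewrite Hmx in H.
  assert ((g m - g x) / (y - m) < (g y - g m) / (y - m)).
  { unfold Rdiv. apply Rmult_lt_compat_r. apply Rinv_0_lt_compat; unfold m; lra. lra. }
  lra.
Qed.

Lemma h1_zero (h h1 h2 : R -> R)
  (Hh_d : forall v, 0 < v -> derivable_pt_lim h v (h1 v))
  (Hh1_d : forall v, 0 < v -> derivable_pt_lim h1 v (h2 v))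
  (Hh_0 : right_lim_infty h 0)
  (Hh_inf : lim_infty_infty (fun v => h v / v)) :
  exists w, 0 < w /\ h1 w = 0.
Proof.
  assert (Ha : exists a, 0 < a <= 1 /\ h1 a < 0).
  { apply NNPP. intros Hn.
    assert (Hp : forall a, 0 < a <= 1 -> 0 <= h1 a).
    { intros a Ha0. destruct (Rle_or_lt 0 (h1 a)); auto. exfalso; apply Hn; eauto. }
    destruct (Hh_0 (h 1)) as [d [Hd Hx]].
    set (x := Rmin d 1 / 2). assert (0 < x < 1 /\ x < d).
    { unfold x. pose proof (Rmin_l d 1). pose proof (Rmin_r d 1). assert (0 < Rmin d 1) by (apply Rmin_pos; lra). lra. }
    specialize (Hx x ltac:(lra)).
    assert (h x <= h 1).
    { apply (mono_of_deriv h h1); [lra| |]. intros c Hc; apply Hh_d; lra. intros c Hc; apply Hp; lra. }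
    lra. }
  assert (Hb : exists b, 1 <= b /\ 0 < h1 b).
  { apply NNPP. intros Hn.
    assert (Hp : forall a, 1 <= a -> h1 a <= 0).
    { intros a Ha0. destruct (Rle_or_lt (h1 a) 0); auto. exfalso; apply Hn; eauto. }
    destruct (Hh_inf (Rabs (h 1))) as [X HX].
    set (x := Rmax X 1 + 1). assert (X < x /\ 1 < x) by (unfold x; pose proof (Rmax_l X 1); pose proof (Rmax_r X 1); lra).
    specialize (HX x ltac:(lra)). simpl in HX.
    assert (h x <= h 1).
    { apply (mono_of_deriv_neg h h1); [lra| |]. intros c Hc; apply Hh_d; lra. intros c Hc; apply Hp; lra. }
    assert (h x / x <= Rabs (h 1)).
    { pose proof (Rle_abs (h 1)). apply (Rmult_le_reg_r x); [lra|]. field_simplify; [|lra].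
      pose proof (Rabs_pos (h 1)). nra. }
    lra. }
  destruct Ha as [a [Ha1 Ha2]]. destruct Hb as [b [Hb1 Hb2]].
  assert (Hab : a < b) by (destruct (Req_dec a b); [subst; lra | lra]).
  destruct (Ranalysis5.IVT_interv h1 a b) as [z [Hz1 Hz2]]; auto.
  intros c Hc. apply (dcont _ _ (h2 c)). apply Hh1_d. lra.
  exists z. split; auto; lra.
Qed.

Lemma Rmax0_lip a b : Rabs (Rmax a 0 - Rmax b 0) <= Rabs (a - b).
Proof. unfold Rmax; repeat destruct Rle_dec; unfold Rabs; repeat destruct Rcase_abs; lra. Qed.

Lemma kcont (kappa : R -> R)
  (Hk : forall x, 0 < x -> continuity_pt kappa x)
  (Hk0 : right_lim kappa 0 (kappa 0)) :
  forall x, continuity_pt (fun s => s * Rmax (kappa (Rmax s 0)) 0) x.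
Proof.
  intros x.
  assert (H1 : continuity_pt (fun s => kappa (Rmax s 0)) x).
  { apply cont_eps. intros eps He.
    destruct (Rlt_or_le 0 x) as [Hx|Hx].
    - destruct (proj1 (cont_eps kappa x) (Hk x Hx) eps He) as [d [Hd Hy]].
      exists (Rmin d x). split. apply Rmin_pos; lra. intros y Hyx.
      pose proof (Rmin_l d x). pose proof (Rmin_r d x).
      rewrite (Rmax_left y) by (apply Rabs_def2 in Hyx; lra).
      rewrite (Rmax_left x) by lra. apply Hy. lra.
    - destruct (Hk0 eps He) as [d [Hd Hy]].
      destruct (Rle_lt_or_eq_dec _ _ Hx) as [Hlt|Heq].
      + exists (- x). split. lra. intros y Hyx. apply Rabs_def2 in Hyx.
        rewrite (Rmax_right y) by lra. rewrite (Rmax_right x) by lra.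
        replace (kappa 0 - kappa 0) with 0 by ring. rewrite Rabs_R0; lra.
      + subst x. exists d. split; auto. intros y Hyx.
        rewrite (Rmax_right 0) by lra. unfold Rmax at 1. destruct (Rle_dec y 0).
        * replace (kappa 0 - kappa 0) with 0 by ring. rewrite Rabs_R0; lra.
        * apply Hy. apply Rabs_def2 in Hyx. lra. }
  assert (H2 : continuity_pt (fun s => Rmax (kappa (Rmax s 0)) 0) x).
  { apply cont_eps. intros eps He. destruct (proj1 (cont_eps _ x) H1 eps He) as [d [Hd Hy]].
    exists d. split; auto. intros y Hyx. eapply Rle_lt_trans. apply Rmax0_lip. apply Hy; auto. }
  apply (continuity_pt_mult (fun s => s) (fun s => Rmax (kappa (Rmax s 0)) 0)); auto.
  apply (dcont _ _ 1). apply derivable_pt_lim_id.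
Qed.

Module Aux.
Import Coquelicot.Coquelicot.

Lemma P_exists (kappa : R -> R)
  (Hk : forall x, 0 < x -> continuity_pt kappa x)
  (Hk0 : right_lim kappa 0 (kappa 0)) (M : R) (HM : 0 < M)
  (Hmu : forall pr : Riemann_integrable (fun s => s * Rmax (kappa s) 0) 0 M, RiemannInt pr <= 1) :
  exists P : R -> R, (forall x, 0 < x < M -> derivable_pt_lim P x (x * Rmax (kappa x) 0)) /\
     (forall x, 0 < x <= M -> 0 <= P x <= 1).
Proof.
  set (gc := fun s => s * Rmax (kappa (Rmax s 0)) 0).
  assert (Hc : forall x, continuous gc x).
  { intros x. apply continuity_pt_filterlim. apply kcont; auto. }
  assert (Hex : forall a b, ex_RInt gc a b).
  { intros a b. apply (@ex_RInt_continuous R_CompleteNormedModule). intros; apply Hc. }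
  assert (Hge : forall x, 0 <= x -> 0 <= gc x).
  { intros x Hx. unfold gc. apply Rmult_le_pos; auto. apply Rmax_r. }
  exists (fun x => RInt gc 0 x). split.
  - intros x Hx. apply is_derive_Reals.
    replace (x * Rmax (kappa x) 0) with (gc x).
    + apply is_derive_RInt with (a := 0). 2: apply Hc.
      apply filter_forall. intros b. apply (@RInt_correct R_CompleteNormedModule). apply Hex.
    + unfold gc. rewrite (Rmax_left x 0) by lra. reflexivity.
  - intros x Hx.
    assert (H0 : 0 <= RInt gc 0 x).
    { apply RInt_ge_0. lra. apply Hex. intros; apply Hge; lra. }
    assert (H1 : 0 <= RInt gc x M).
    { apply RInt_ge_0. lra. apply Hex. intros; apply Hge; lra. }
    assert (HC : RInt gc 0 x + RInt gc x M = RInt gc 0 M).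
    { apply (RInt_Chasles gc 0 x M); apply Hex. }
    assert (pr : Riemann_integrable gc 0 M).
    { apply continuity_implies_RiemannInt. lra. intros; apply kcont; auto. }
    assert (pr' : Riemann_integrable (fun s => s * Rmax (kappa s) 0) 0 M).
    { apply (Riemann_integrable_ext gc); auto. intros y Hy.
      rewrite Rmin_left in Hy by lra. unfold gc. rewrite (Rmax_left y 0) by lra. reflexivity. }
    specialize (Hmu pr').
    rewrite <- RInt_Reals in Hmu.
    assert (RInt gc 0 M = RInt (fun s => s * Rmax (kappa s) 0) 0 M).
    { apply RInt_ext. intros y Hy. rewrite Rmin_left in Hy by lra. unfold gc. rewrite (Rmax_left y 0) by lra. reflexivity. }
    split; lra.
Qed.
End Aux.

Section FPos.
Variables (kappa f f1 P : R -> R) (M : R).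
Hypothesis (Hf_d : forall x, 0 < x -> derivable_pt_lim f x (f1 x))
  (Hf1_d : forall x, 0 < x -> derivable_pt_lim f1 x (- kappa x * f x))
  (Hf_0 : f 0 = 0) (Hf1_0c : right_lim f1 0 1) (Hf_r0 : right_deriv f 0 1)
  (HPd : forall x, 0 < x < M -> derivable_pt_lim P x (x * Rmax (kappa x) 0))
  (HPb : forall x, 0 < x <= M -> 0 <= P x <= 1).

Let G := fun x => f1 x - (1 - P x) * (f x / x).
Let Gd := fun x => - kappa x * f x - ((0 - x * Rmax (kappa x) 0) * (f x / x)
          + (1 - P x) * ((f1 x * x - 1 * f x) / x²)).

Lemma G_deriv x : 0 < x < M -> derivable_pt_lim G x (Gd x).
Proof.
  intros Hx. unfold G, Gd.
  apply (derivable_pt_lim_minus f1 (fun x => (1 - P x) * (f x / x))). apply Hf1_d; lra.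
  apply (derivable_pt_lim_mult (fun x => 1 - P x) (fun x => f x / x)).
  apply (derivable_pt_lim_minus (fct_cte 1) P). apply derivable_pt_lim_const. apply HPd; auto.
  apply (derivable_pt_lim_div f (fun x => x)). apply Hf_d; lra. apply derivable_pt_lim_id. lra.
Qed.

Lemma Gd_nonneg x : 0 < x < M -> 0 < f x -> G x < 0 -> 0 <= Gd x.
Proof.
  intros Hx Hf HG. unfold G, Gd in *. destruct (HPb x ltac:(lra)) as [HP0 HP1].
  assert (Hk : 0 <= - kappa x * f x + x * Rmax (kappa x) 0 * (f x / x)).
  { replace (x * Rmax (kappa x) 0 * (f x / x)) with (Rmax (kappa x) 0 * f x) by (field; lra).
    pose proof (Rmax_l (kappa x) 0). nra. }
  assert (Hq : f1 x * x - f x <= 0).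
  { assert (f1 x < (1 - P x) * (f x / x)) by lra.
    assert (f1 x * x < (1 - P x) * f x).
    { replace ((1 - P x) * f x) with ((1 - P x) * (f x / x) * x) by (field; lra). nra. }
    assert (0 <= P x * f x) by (apply Rmult_le_pos; lra). lra. }
  assert (0 <= - ((1 - P x) * ((f1 x * x - 1 * f x) / x²))).
  { unfold Rsqr. replace ((f1 x * x - 1 * f x) / (x * x)) with ((f1 x * x - f x) * / (x * x)) by (field; lra).
    assert (0 < / (x * x)) by (apply Rinv_0_lt_compat; nra).
    assert (Hqi : (f1 x * x - f x) * / (x * x) <= 0) by nra.
    assert (0 <= (1 - P x) * - ((f1 x * x - f x) * / (x * x))) by (apply Rmult_le_pos; lra).
    lra. }
  lra.
Qed.

Lemma f_small : exists d, 0 < d /\ forall x, 0 < x < d -> 1/2 < f x / x < 3/2.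
Proof.
  destruct (Hf_r0 (1/2) ltac:(lra)) as [d [Hd Hx]]. exists d. split; auto.
  intros x Hx0. specialize (Hx x ltac:(lra)). rewrite Hf_0 in Hx.
  replace ((f x - 0) / (x - 0)) with (f x / x) in Hx by (f_equal; ring).
  apply Rabs_def2 in Hx. lra.
Qed.

Lemma barrier z : 0 < z <= M -> (forall t, 0 < t < z -> 0 < f t) ->
  forall x0, 0 < x0 < z -> 0 <= G x0.
Proof.
  intros Hz Hpos x0 Hx0. destruct (Rle_or_lt 0 (G x0)) as [H|HG]; auto. exfalso.
  assert (Hder : forall c, 0 < c <= x0 -> derivable_pt_lim G c (Gd c)).
  { intros c Hc. apply G_deriv. lra. }
  destruct (classic (exists t, 0 < t <= x0 /\ 0 <= G t)) as [Hne|Hemp].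
  - set (S := fun t => 0 < t <= x0 /\ 0 <= G t).
    destruct (completeness S) as [x1 [Hub Hlub]].
    { exists x0. intros t Ht. apply Ht. }
    { destruct Hne as [t Ht]. exists t. exact Ht. }
    destruct Hne as [t0 Ht0].
    assert (Ht0x1 : t0 <= x1) by (apply Hub; exact Ht0).
    assert (Hx1x0 : x1 <= x0) by (apply Hlub; intros t Ht; apply Ht).
    assert (HGx1 : 0 <= G x1).
    { destruct (Rle_or_lt 0 (G x1)) as [Hg|Hg]; auto. exfalso.
      destruct (proj1 (cont_eps G x1) (dcont _ _ _ (Hder x1 ltac:(lra))) (- G x1) ltac:(lra)) as [d [Hd Hy]].
      assert (Hub' : is_upper_bound S (x1 - d/2)).
      { intros t Ht. destruct (Rle_or_lt t (x1 - d/2)) as [Hle|Hlt]; auto. exfalso.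
        assert (t <= x1) by (apply Hub; auto).
        specialize (Hy t ltac:(rewrite Rabs_left1; lra)). apply Rabs_def2 in Hy. destruct Ht. lra. }
      specialize (Hlub _ Hub'). lra. }
    assert (Hlt : x1 < x0) by (destruct (Req_dec x1 x0); [subst; lra|lra]).
    assert (G x1 <= G x0).
    { apply (mono_of_deriv G Gd); auto. intros c Hc. apply Hder; lra.
      intros c Hc. apply Gd_nonneg. lra. apply Hpos; lra.
      destruct (Rle_or_lt 0 (G c)) as [Hgc|Hgc]; auto. exfalso.
      assert (c <= x1) by (apply Hub; split; [lra|auto]). lra. }
    lra.
  - assert (Hneg : forall t, 0 < t <= x0 -> G t < 0).
    { intros t Ht. destruct (Rle_or_lt 0 (G t)); auto. exfalso; apply Hemp; eauto. }
    set (e := - G x0 / 2).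
    destruct (Hf1_0c e ltac:(unfold e; lra)) as [d1 [Hd1 H1]].
    destruct (Hf_r0 e ltac:(unfold e; lra)) as [d2 [Hd2 H2]].
    set (t := Rmin (Rmin d1 d2) x0 / 2).
    assert (Ht : 0 < t < d1 /\ t < d2 /\ t < x0).
    { unfold t. pose proof (Rmin_l (Rmin d1 d2) x0). pose proof (Rmin_r (Rmin d1 d2) x0).
      pose proof (Rmin_l d1 d2). pose proof (Rmin_r d1 d2).
      assert (0 < Rmin (Rmin d1 d2) x0) by (repeat apply Rmin_pos; lra). lra. }
    specialize (H1 t ltac:(lra)). specialize (H2 t ltac:(lra)).
    rewrite Hf_0 in H2. replace ((f t - 0) / (t - 0)) with (f t / t) in H2 by (f_equal; ring).
    apply Rabs_def2 in H1. apply Rabs_def2 in H2.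
    assert (G t <= G x0).
    { apply (mono_of_deriv G Gd); [lra| |]. intros c Hc. apply Hder; lra.
      intros c Hc. apply Gd_nonneg. lra. apply Hpos; lra. apply Hneg; lra. }
    assert (Hft : 0 < f t / t).
    { unfold Rdiv. apply Rmult_lt_0_compat. apply Hpos; lra. apply Rinv_0_lt_compat; lra. }
    destruct (HPb t ltac:(lra)).
    assert (f1 t - f t / t <= G t) by (unfold G; nra).
    unfold e in *. lra.
Qed.

Lemma f_pos : 0 < M -> forall x, 0 < x <= M -> 0 < f x.
Proof.
  intros HM x2 Hx2. destruct (Rlt_or_le 0 (f x2)) as [H|Hf2]; auto. exfalso.
  destruct f_small as [d0 [Hd0 Hsm]].
  assert (Hsmall : forall t, 0 < t < d0 -> 0 < f t).
  { intros t Ht. specialize (Hsm t Ht). assert (f t = f t / t * t) by (field; lra). nra. }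
  set (S := fun y => 0 < y <= x2 /\ forall t, 0 < t <= y -> 0 < f t).
  set (y0 := Rmin (d0/2) x2).
  assert (Hy0 : 0 < y0 <= x2 /\ y0 < d0).
  { unfold y0. pose proof (Rmin_l (d0/2) x2). pose proof (Rmin_r (d0/2) x2).
    assert (0 < Rmin (d0/2) x2) by (apply Rmin_pos; lra). lra. }
  destruct (completeness S) as [z [Hub Hlub]].
  { exists x2. intros y Hy. apply Hy. }
  { exists y0. split. lra. intros t Ht. apply Hsmall. lra. }
  assert (Hy0z : y0 <= z). { apply Hub. split. lra. intros t Ht. apply Hsmall. lra. }
  assert (Hzx2 : z <= x2) by (apply Hlub; intros y Hy; apply Hy).
  assert (Hposz : forall t, 0 < t < z -> 0 < f t).
  { intros t Ht. apply NNPP. intros Hn.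
    assert (Hub' : is_upper_bound S t).
    { intros y [Hy1 Hy2]. destruct (Rle_or_lt y t) as [Hle|Hlt]; auto. exfalso. apply Hn. apply Hy2. lra. }
    specialize (Hlub _ Hub'). lra. }
  assert (HGz := barrier z ltac:(lra) Hposz).
  assert (Hfz : 0 < f z).
  { assert (f (z/2) <= f z).
    { apply (mono_of_deriv f f1); [lra| |]. intros c Hc. apply Hf_d. lra.
      intros c Hc. specialize (HGz c ltac:(lra)). unfold G in HGz.
      destruct (HPb c ltac:(lra)). assert (0 < f c / c).
      { unfold Rdiv. apply Rmult_lt_0_compat. apply Hposz; lra. apply Rinv_0_lt_compat; lra. }
      nra. }
    assert (0 < f (z/2)) by (apply Hposz; lra). lra. }
  destruct (Req_dec z x2) as [Heq|Hne]. { subst. lra. }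
  destruct (proj1 (cont_eps f z) (dcont _ _ _ (Hf_d z ltac:(lra))) (f z) Hfz) as [d [Hd Hy]].
  set (z' := Rmin (z + d/2) x2).
  assert (Hz' : z < z' <= x2 /\ z' <= z + d/2).
  { unfold z'. pose proof (Rmin_l (z + d/2) x2). pose proof (Rmin_r (z + d/2) x2).
    unfold Rmin; destruct Rle_dec; lra. }
  assert (S z').
  { split. lra. intros t Ht. destruct (Rlt_or_le t z). apply Hposz; lra.
    specialize (Hy t ltac:(rewrite Rabs_right; lra)). apply Rabs_def2 in Hy. lra. }
  specialize (Hub _ H). lra.
Qed.
End FPos.

Lemma r0_le (r r1 : R -> R) r0 lambda
  (Hr_d : forall p, 0 < p < 1 -> derivable_pt_lim r p (r1 p))
  (Hr_d1 : left_deriv r 1 (r1 1))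
  (Hr1_pos : forall p, 0 < p <= 1 -> 0 < r1 p)
  (Hr0 : right_lim r 0 r0) (Hr_1 : r 1 = lambda) : r0 <= lambda.
Proof.
  assert (Hinc : forall a b, 0 < a -> a < b -> b < 1 -> r a < r b).
  { intros a b Ha Hab Hb. apply (smono_of_deriv r r1); auto. intros c Hc; apply Hr_d; lra.
    intros c Hc; apply Hr1_pos; lra. }
  assert (Ha : r0 <= r (1/2)).
  { destruct (Rle_or_lt r0 (r (1/2))) as [H|H]; auto. exfalso.
    destruct (Hr0 (r0 - r (1/2)) ltac:(lra)) as [d [Hd Hy]].
    set (t := Rmin d (1/2) / 2).
    assert (0 < t < d /\ t < 1/2).
    { unfold t. pose proof (Rmin_l d (1/2)). pose proof (Rmin_r d (1/2)).
      assert (0 < Rmin d (1/2)) by (apply Rmin_pos; lra). lra. }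
    specialize (Hy t ltac:(lra)). apply Rabs_def2 in Hy.
    assert (r t < r (1/2)) by (apply Hinc; lra). lra. }
  assert (Hb : r (1/2) <= r 1).
  { destruct (Rle_or_lt (r (1/2)) (r 1)) as [H|H]; auto. exfalso.
    destruct (Hr_d1 1 ltac:(lra)) as [d [Hd Hy]].
    set (e0 := r (1/2) - r 1). set (B := Rabs (r1 1) + 1).
    assert (HB : 0 < B) by (unfold B; pose proof (Rabs_pos (r1 1)); lra).
    set (s := Rmin (Rmin (d/2) (1/4)) (e0 / (2 * B))).
    assert (Hs : 0 < s /\ s < d /\ s <= 1/4 /\ s <= e0 / (2 * B)).
    { unfold s. pose proof (Rmin_l (Rmin (d/2) (1/4)) (e0 / (2 * B))).
      pose proof (Rmin_r (Rmin (d/2) (1/4)) (e0 / (2 * B))).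
      pose proof (Rmin_l (d/2) (1/4)). pose proof (Rmin_r (d/2) (1/4)).
      assert (0 < e0 / (2 * B)) by (apply Rdiv_lt_0_compat; unfold e0; lra).
      assert (0 < Rmin (Rmin (d/2) (1/4)) (e0 / (2 * B))) by (repeat apply Rmin_pos; lra).
      lra. }
    set (x := 1 - s). specialize (Hy x ltac:(unfold x; lra)).
    set (q := (r x - r 1) / (x - 1)) in Hy.
    assert (Hq : r x - r 1 = q * (x - 1)) by (unfold q; field; unfold x; lra).
    apply Rabs_def2 in Hy. pose proof (Rle_abs (r1 1)). pose proof (Rle_abs (- r1 1)).
    rewrite Rabs_Ropp in *.
    assert (Hqb : - B < q < B) by (unfold B; lra).
    assert (r (1/2) < r x) by (apply Hinc; unfold x; lra).
    assert (Hsb : s * (2 * B) <= e0).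
    { destruct Hs as [_ [_ [_ Hs4]]]. apply (Rmult_le_compat_r (2 * B)) in Hs4; [|lra].
      replace (e0 / (2 * B) * (2 * B)) with e0 in Hs4 by (field; lra). lra. }
    unfold x in *. replace (1 - s - 1) with (- s) in Hq by ring.
    assert (q * (- s) <= B * s) by nra. unfold e0 in *. lra. }
  lra.
Qed.

Lemma pow_ge (t : R) (k : nat) : 1 <= t -> (1 <= k)%nat -> t <= t ^ k.
Proof.
  intros Ht Hk. destruct k as [|m]; [lia|]. simpl. pose proof (pow_R1_Rle t m Ht). nra.
Qed.

Theorem proposition4p3
  (n : nat) (Hn : (2 <= n)%nat)
  (* kappa continuous on [0, oo) *)
  (kappa : R -> R)
  (Hkappa_c : forall x, 0 < x -> continuity_pt kappa x)
  (Hkappa_0 : right_lim kappa 0 (kappa 0))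
  (* f'' + kappa f = 0, f(0) = 0, f'(0) = 1 ; f1 = f' *)
  (f f1 : R -> R)
  (Hf_d : forall x, 0 < x -> derivable_pt_lim f x (f1 x))
  (Hf1_d : forall x, 0 < x -> derivable_pt_lim f1 x (- kappa x * f x))
  (Hf_0 : f 0 = 0) (Hf_0c : right_lim f 0 0)
  (Hf1_0 : f1 0 = 1) (Hf1_0c : right_lim f1 0 1)
  (Hf_r0 : right_deriv f 0 1)
  (* stored energy: phi with derivatives phi1, phi2; h with h1, h2 *)
  (phi phi1 phi2 h h1 h2 : R -> R)
  (* (A1) *)
  (Hh_d : forall v, 0 < v -> derivable_pt_lim h v (h1 v))
  (Hh1_d : forall v, 0 < v -> derivable_pt_lim h1 v (h2 v))
  (Hh2_c : forall v, 0 < v -> continuity_pt h2 v)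
  (Hh_sc : strictly_convex_pos h)
  (* (A2) *)
  (Hh_0 : right_lim_infty h 0)
  (Hh_inf : lim_infty_infty (fun v => h v / v))
  (* (A4) *)
  (Hphi_pos : forall v, 0 < v -> 0 < phi v)
  (Hphi_d : forall v, 0 < v -> derivable_pt_lim phi v (phi1 v))
  (Hphi1_d : forall v, 0 < v -> derivable_pt_lim phi1 v (phi2 v))
  (Hphi2_c : forall v, 0 < v -> continuity_pt phi2 v)
  (Hphi_cvx : convex_pos phi)
  (* (A5) *)
  (Hphi_A5 : forall v w, 0 < v -> v < w -> v * phi1 v < w * phi1 w)
  (* (A6) *)
  (t0 : R) (Ht0 : 0 <= t0) (Ht0_phi : right_lim phi1 t0 0)
  (q1 q1d q0 q0d : R -> R)
  (Hq1_sup : forall s, 1 <= s ->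
     is_lub (fun y => exists v, t0 < v /\ y = phi1 v / phi1 (s * v)) (q1 s))
  (Hq0_inf : forall s, 0 < s <= 1 ->
     is_glb (fun y => exists v, t0 / s < v /\ y = phi1 v / phi1 (s * v)) (q0 s))
  (Hq1_d : forall s, 1 < s -> derivable_pt_lim q1 s (q1d s))
  (Hq1_d1 : right_deriv q1 1 (q1d 1))
  (Hq1d_c : forall s, 1 < s -> continuity_pt q1d s)
  (Hq1d_c1 : right_lim q1d 1 (q1d 1))
  (Hq1d_neg : forall s, 1 <= s -> q1d s < 0)
  (Hq1_lim : lim_infty q1 0)
  (Hq0_d : forall s, 0 < s < 1 -> derivable_pt_lim q0 s (q0d s))
  (Hq0_d1 : left_deriv q0 1 (q0d 1))
  (Hq0d_c : forall s, 0 < s < 1 -> continuity_pt q0d s)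
  (Hq0d_c1 : left_lim q0d 1 (q0d 1))
  (Hq0d_neg : forall s, 0 < s <= 1 -> q0d s < 0)
  (Hq0_lim : right_lim_infty q0 0)
  (* (A7) *)
  (HA7 : exists delta0 delta1, 0 < delta0 /\ 0 < delta1 /\
     forall v s, 0 < v -> 0 < s -> Rabs (s - 1) < delta0 ->
       Rabs (phi1 (s * v)) <= delta1 * phi v / v)
  (* (A8) with beta = 0 *)
  (HA8 : exists delta2 alpha, 0 < delta2 /\ 0 < alpha < INR n /\
     forall v, 0 < v -> phi v <= delta2 * (1 + Rpower v alpha + Rpower v (- 0)))
  (* lambda *)
  (lambda : R) (Hlambda : 0 < lambda)
  (Hmu : forall pr : Riemann_integrable (fun s => s * Rmax (kappa s) 0) 0 (Rmax lambda 1),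
     RiemannInt pr <= 1)
  (* the equilibrium solution r with r' = r1, r'' = r2 *)
  (r r1 r2 : R -> R)
  (Hr_d : forall p, 0 < p < 1 -> derivable_pt_lim r p (r1 p))
  (Hr_d1 : left_deriv r 1 (r1 1))
  (Hr1_c : forall p, 0 < p < 1 -> continuity_pt r1 p)
  (Hr1_c1 : left_lim r1 1 (r1 1))
  (Hr1_d : forall p, 0 < p < 1 -> derivable_pt_lim r1 p (r2 p))
  (Hr1_pos : forall p, 0 < p <= 1 -> 0 < r1 p)
  (r0 : R) (Hr0 : right_lim r 0 r0) (Hr0_nn : 0 <= r0)
  (Hr_1 : r 1 = lambda)
  (Heq : forall p, 0 < p < 1 ->
     let tau := f (r p) / f p in
     f p * (phi2 (r1 p) + h2 (r1 p * tau ^ (n - 1)) * tau ^ (2 * (n - 1))) * r2 p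
     = INR (n - 1) * (f1 (r p) * phi1 tau - f1 p * phi1 (r1 p))
       - INR (n - 1) * (f1 (r p) * r1 p - f1 p * tau)
         * h2 (r1 p * tau ^ (n - 1)) * r1 p * tau ^ (2 * n - 3))
  (* cavitating *)
  (Hcav_r0 : 0 < r0)
  (Hcav_T : right_lim (fun p =>
     let tau := f (r p) / f p in
     tau ^ (n - 1) * (phi1 (r1 p) + h1 (r1 p * tau ^ (n - 1)) * tau ^ (n - 1))) 0 0) :
  (exists w, 0 < w /\ h1 w = 0) /\
  (forall w, 0 < w -> h1 w = 0 ->
     right_lim (fun p => r1 p * (f (r p) / f p) ^ (n - 1)) 0 w).
Proof.
  set (M := Rmax lambda 1).
  assert (HM : 0 < M) by (unfold M; pose proof (Rmax_r lambda 1); lra).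
  destruct (Aux.P_exists kappa Hkappa_c Hkappa_0 M HM Hmu) as [P [HPd HPb]].
  assert (Hfpos := f_pos kappa f f1 P M Hf_d Hf1_d Hf_0 Hf1_0c Hf_r0 HPd HPb HM).
  assert (Hr0M : r0 <= M).
  { pose proof (r0_le r r1 r0 lambda Hr_d Hr_d1 Hr1_pos Hr0 Hr_1). unfold M. pose proof (Rmax_l lambda 1). lra. }
  assert (Hfr0 : 0 < f r0) by (apply Hfpos; lra).
  assert (Hphi1 := phi1_nonneg phi phi1 n Hphi_d Hphi_A5 HA8).
  assert (Hphim := cvx_mono phi phi1 Hphi_d Hphi_cvx).
  assert (Hh1m := scvx_smono h h1 Hh_d Hh_sc).
  split. { apply (h1_zero h h1 h2); auto. }
  intros w0 Hw0 Hh1w0.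
  assert (Htau : forall K, 0 < K -> exists d, 0 < d /\ forall p, 0 < p < d -> K <= f (r p) / f p).
  { intros K HK.
    destruct (proj1 (cont_eps f r0) (dcont _ _ _ (Hf_d r0 Hcav_r0)) (f r0 / 2) ltac:(lra)) as [d1 [Hd1 Hc1]].
    destruct (Hr0 d1 Hd1) as [d2 [Hd2 Hc2]].
    destruct (f_small f Hf_0 Hf_r0) as [d3 [Hd3 Hc3]].
    exists (Rmin (Rmin d2 d3) (f r0 / (4 * K))). split.
    { repeat apply Rmin_pos; auto. apply Rdiv_lt_0_compat; lra. }
    intros p Hp. pose proof (Rmin_l (Rmin d2 d3) (f r0 / (4 * K))). pose proof (Rmin_r (Rmin d2 d3) (f r0 / (4 * K))).
    pose proof (Rmin_l d2 d3). pose proof (Rmin_r d2 d3).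
    specialize (Hc2 p ltac:(lra)).
    specialize (Hc1 (r p) Hc2). apply Rabs_def2 in Hc1.
    specialize (Hc3 p ltac:(lra)).
    assert (Hfp : f p < 2 * p) by (assert (f p = f p / p * p) by (field; lra); nra).
    assert (Hfp0 : 0 < f p) by (assert (f p = f p / p * p) by (field; lra); nra).
    assert (Hpk : p * (4 * K) < f r0).
    { assert (p < f r0 / (4 * K)) by lra. apply (Rmult_lt_compat_r (4 * K)) in H3; [|lra].
      replace (f r0 / (4 * K) * (4 * K)) with (f r0) in H3 by (field; lra). lra. }
    apply (Rmult_le_reg_r (f p)); auto. replace (f (r p) / f p * f p) with (f (r p)) by (field; lra).
    nra. }
  intros eps Heps.
  set (e := Rmin eps (w0 / 2)).
  assert (He : 0 < e <= eps /\ e <= w0 / 2).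
  { unfold e. split; [split|]. apply Rmin_pos; lra. apply Rmin_l. apply Rmin_r. }
  set (a := h1 (w0 - e)). set (b := h1 (w0 + e)).
  assert (Ha : a < 0) by (unfold a; rewrite <- Hh1w0; apply Hh1m; lra).
  assert (Hb : 0 < b) by (unfold b; rewrite <- Hh1w0; apply Hh1m; lra).
  set (eta := Rmin (- a) b / 2).
  assert (Heta : 0 < eta /\ eta <= - a / 2 /\ eta <= b / 2).
  { unfold eta. pose proof (Rmin_l (- a) b). pose proof (Rmin_r (- a) b).
    assert (0 < Rmin (- a) b) by (apply Rmin_pos; lra). lra. }
  set (c1 := phi1 1). assert (Hc1 : 0 <= c1) by (apply Hphi1; lra).
  set (K := Rmax 1 (Rmax (2 * w0) (2 * c1 / eta + 1))).
  assert (HK : 1 <= K /\ 2 * w0 <= K /\ 2 * c1 / eta + 1 <= K).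
  { unfold K. pose proof (Rmax_l 1 (Rmax (2 * w0) (2 * c1 / eta + 1))).
    pose proof (Rmax_r 1 (Rmax (2 * w0) (2 * c1 / eta + 1))).
    pose proof (Rmax_l (2 * w0) (2 * c1 / eta + 1)). pose proof (Rmax_r (2 * w0) (2 * c1 / eta + 1)). lra. }
  destruct (Htau K ltac:(lra)) as [d1 [Hd1 Htd]].
  destruct (Hcav_T (eta / 2) ltac:(lra)) as [d2 [Hd2 HTd]].
  exists (Rmin (Rmin d1 d2) 1). split. { repeat apply Rmin_pos; lra. }
  intros p Hp. pose proof (Rmin_l (Rmin d1 d2) 1). pose proof (Rmin_r (Rmin d1 d2) 1).
  pose proof (Rmin_l d1 d2). pose proof (Rmin_r d1 d2).
  specialize (Htd p ltac:(lra)). specialize (HTd p ltac:(lra)). cbv zeta in HTd.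
  set (tau := f (r p) / f p) in *.
  set (A := tau ^ (n - 1)) in *.
  assert (HA : K <= A) by (unfold A; pose proof (pow_ge tau (n - 1) ltac:(lra) ltac:(lia)); lra).
  assert (Hr1p : 0 < r1 p) by (apply Hr1_pos; lra).
  set (w := r1 p * A) in *.
  set (T := A * (phi1 (r1 p) + h1 w * A)) in *.
  rewrite Rminus_0_r in HTd. apply Rabs_def2 in HTd.
  assert (Hw : 0 < w) by (unfold w; nra).
  assert (Hh1w : h1 w = (T - A * phi1 (r1 p)) / (A * A)) by (unfold T; field; lra).
  assert (HA2 : 1 <= A * A) by nra.
  assert (Hup : h1 w < b).
  { assert (0 <= A * phi1 (r1 p)) by (apply Rmult_le_pos; [lra|apply Hphi1; auto]).
    assert (h1 w <= eta / 2).
    { rewrite Hh1w. apply (Rmult_le_reg_r (A * A)); [lra|].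
      replace ((T - A * phi1 (r1 p)) / (A * A) * (A * A)) with (T - A * phi1 (r1 p)) by (field; lra).
      nra. }
    lra. }
  assert (Hwu : w < w0 + e).
  { destruct (Rlt_or_le w (w0 + e)) as [Hx|Hx]; auto. exfalso.
    destruct (Rle_lt_or_eq_dec _ _ Hx) as [Hl|Hq]. pose proof (Hh1m (w0 + e) w ltac:(lra) Hl) as Hm. fold b in Hm. lra.
    rewrite <- Hq in Hup. fold b in Hup. lra. }
  assert (Hr1le : r1 p <= 1).
  { assert (r1 p * A < A) by (unfold w in Hwu; lra). nra. }
  assert (Hph : phi1 (r1 p) <= c1) by (apply Hphim; auto).
  assert (Hlow : a < h1 w).
  { assert (Hc1A : c1 / A < eta / 2).
    { apply (Rmult_lt_reg_r A); [lra|]. replace (c1 / A * A) with c1 by (field; lra).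
      assert (2 * c1 / eta + 1 <= A) by lra.
      assert (2 * c1 / eta * eta = 2 * c1) by (field; lra). nra. }
    assert (h1 w >= - (eta / 2) - c1 / A).
    { rewrite Hh1w. apply Rle_ge. apply (Rmult_le_reg_r (A * A)); [lra|].
      replace ((T - A * phi1 (r1 p)) / (A * A) * (A * A)) with (T - A * phi1 (r1 p)) by (field; lra).
      replace ((- (eta / 2) - c1 / A) * (A * A)) with (- (eta / 2) * (A * A) - c1 * A) by (field; lra).
      assert (A * phi1 (r1 p) <= c1 * A) by nra. nra. }
    lra. }
  assert (Hwl : w0 - e < w).
  { destruct (Rlt_or_le (w0 - e) w) as [Hx|Hx]; auto. exfalso.
    destruct (Rle_lt_or_eq_dec _ _ Hx) as [Hl|Hq]. pose proof (Hh1m w (w0 - e) Hw Hl) as Hm. fold a in Hm. lra.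
    rewrite Hq in Hlow. fold a in Hlow. lra. }
  apply Rabs_def1; lra.
Qed.
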